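(* For every $n\ge 7$, the graph $G_n$ is not an IP-SEG* graph.
   Context: Let $L_1$ and $L_2$ be two distinct parallel horizontal lines in the plane. A closed straight line segment is an interval segment if both of its endpoints lie on the same line $L_i$, and a permutation segment if one endpoint lies on $L_1$ and the other on $L_2$. An IP-SEG model is a finite family of interval and permutation segments; its intersection graph has one vertex per segment, adjacent iff the segments intersect. An IP-SEG* model is an IP-SEG model in which all interval segments lie on the same line $L_i$; a graph is an IP-SEG* graph if it is isomorphic to the intersection graph of an IP-SEG* model. For $n\ge 3$, $G_n$ is the graph on $3n$ vertices $v_1,\dots,v_n,w_1,\dots,w_n,z_1,\dots,z_n$ whose edges are $v_iv_{i+1}$ (indices mod $n$), $v_iw_i$ and $w_iz_i$ for $1\le i\le n$, and no others (a chordless cycle with a pendant path of length $2$ attached at each cycle vertex). *)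

(* Defs.v *)
From Stdlib Require Import Reals Arith.
Open Scope R_scope.

Definition point : Type := (R * R)%type.
Definition segment : Type := (point * point)%type.

Definition on_hline (h : R) (p : point) : Prop := snd p = h.

Definition in_segment (s : segment) (x : point) : Prop :=
  exists t : R, 0 <= t <= 1 /\
    fst x = (1 - t) * fst (fst s) + t * fst (snd s) /\
    snd x = (1 - t) * snd (fst s) + t * snd (snd s).

Definition segs_intersect (s1 s2 : segment) : Prop :=
  exists x : point, in_segment s1 x /\ in_segment s2 x.

Definition interval_seg_on (h : R) (s : segment) : Prop :=
  on_hline h (fst s) /\ on_hline h (snd s).

Definition interval_seg (h1 h2 : R) (s : segment) : Prop :=
  interval_seg_on h1 s \/ interval_seg_on h2 s.

Definition permutation_seg (h1 h2 : R) (s : segment) : Prop :=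
  (on_hline h1 (fst s) /\ on_hline h2 (snd s)) \/
  (on_hline h2 (fst s) /\ on_hline h1 (snd s)).

Definition IP_SEG_star_graph (h1 h2 : R) (V : Type) (D : V -> Prop)
    (adj : V -> V -> Prop) : Prop :=
  exists f : V -> segment,
    (forall x, D x -> interval_seg h1 h2 (f x) \/ permutation_seg h1 h2 (f x)) /\
    (exists h, (h = h1 \/ h = h2) /\
       forall x, D x -> interval_seg h1 h2 (f x) -> interval_seg_on h (f x)) /\
    (forall x y, D x -> D y -> x <> y -> (adj x y <-> segs_intersect (f x) (f y))).

(* Vertices of G_n: v_i, w_i, z_i for 0 <= i < n (0-based indices). *)
Inductive Gvtx : Type := Vv (i : nat) | Wv (i : nat) | Zv (i : nat).

Definition Gvalid (n : nat) (x : Gvtx) : Prop :=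
  match x with Vv i | Wv i | Zv i => (i < n)%nat end.

Definition Gadj (n : nat) (x y : Gvtx) : Prop :=
  match x, y with
  | Vv i, Vv j => j = Nat.modulo (i + 1) n \/ i = Nat.modulo (j + 1) n
  | Vv i, Wv j | Wv j, Vv i => i = j
  | Wv i, Zv j | Zv j, Wv i => i = j
  | _, _ => False
  end.

(* Main.v *)
Require Import Defs.
From Stdlib Require Import Reals Arith Lia Lra Psatz Classical.
Open Scope R_scope.


Inductive Dat := DI (l r : R) | DP (a b : R).

Definition meetD (D E : Dat) : Prop :=
  match D, E with
  | DI l1 r1, DI l2 r2 => l1 <= r2 /\ l2 <= r1
  | DI l r, DP a _ => l <= a <= r
  | DP a _, DI l r => l <= a <= r
  | DP a1 b1, DP a2 b2 => (a1 - a2) * (b1 - b2) <= 0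
  end.

Definition wfD (D : Dat) : Prop := match D with DI l r => l <= r | DP _ _ => True end.

Definition repD (h h' : R) (s : segment) (D : Dat) : Prop :=
  match D with
  | DI l r => l <= r /\ forall p, in_segment s p <-> (snd p = h /\ l <= fst p <= r)
  | DP a b => forall p, in_segment s p <->
      exists t, 0 <= t <= 1 /\ fst p = (1 - t) * a + t * b /\ snd p = (1 - t) * h + t * h'
  end.

Lemma conv_ex x1 x x2 : x1 <= x <= x2 -> exists t, 0 <= t <= 1 /\ x = (1 - t) * x1 + t * x2.
Proof.
  intros [H1 H2]. destruct (Req_dec x1 x2) as [E|E].
  - exists 0. split; [lra|]. subst. lra.
  - assert (Hk : 0 < x2 - x1) by lra.
    exists ((x - x1) * / (x2 - x1)). split; [split|].
    + apply Rmult_le_pos; [lra| apply Rlt_le, Rinv_0_lt_compat; lra].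
    + apply (Rmult_le_reg_r (x2 - x1)); [lra|].
      replace ((x - x1) * / (x2 - x1) * (x2 - x1)) with (x - x1) by (field; lra). lra.
    + field; lra.
Qed.

Lemma conv_ex2 x1 x x2 : Rmin x1 x2 <= x <= Rmax x1 x2 ->
  exists t, 0 <= t <= 1 /\ x = (1 - t) * x1 + t * x2.
Proof.
  unfold Rmin, Rmax; destruct (Rle_dec x1 x2); intros H.
  - apply conv_ex; lra.
  - destruct (conv_ex x2 x x1) as [t [Ht E]]; [lra|]. exists (1 - t). split; [lra|]. rewrite E; ring.
Qed.

Lemma rep_interval h s : interval_seg_on h s ->
  repD h h s (DI (Rmin (fst (fst s)) (fst (snd s))) (Rmax (fst (fst s)) (fst (snd s)))).
Proof.
  destruct s as [[x1 y1] [x2 y2]]; unfold interval_seg_on, on_hline; simpl.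
  intros [-> ->]. split.
  { unfold Rmin, Rmax; destruct (Rle_dec x1 x2); lra. }
  intros [px py]; unfold in_segment; simpl. split.
  - intros [t [Ht [E1 E2]]]. split; [rewrite E2; ring|].
    rewrite E1. unfold Rmin, Rmax; destruct (Rle_dec x1 x2); split; nra.
  - intros [E H]. destruct (conv_ex2 x1 px x2 H) as [t [Ht E']].
    exists t. split; [auto|]. split; [auto|]. rewrite E; ring.
Qed.

Lemma rep_perm1 h h' s : on_hline h (fst s) -> on_hline h' (snd s) ->
  repD h h' s (DP (fst (fst s)) (fst (snd s))).
Proof.
  destruct s as [[x1 y1] [x2 y2]]; unfold on_hline; simpl. intros -> ->.
  intros p; unfold in_segment; simpl. tauto.
Qed.

Lemma rep_perm2 h h' s : on_hline h' (fst s) -> on_hline h (snd s) ->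
  repD h h' s (DP (fst (snd s)) (fst (fst s))).
Proof.
  destruct s as [[x1 y1] [x2 y2]]; unfold on_hline; simpl. intros -> ->.
  intros p; unfold in_segment; simpl. split.
  - intros [t [Ht [E1 E2]]]. exists (1 - t). split; [lra|]. split; [rewrite E1|rewrite E2]; ring.
  - intros [t [Ht [E1 E2]]]. exists (1 - t). split; [lra|]. split; [rewrite E1|rewrite E2]; ring.
Qed.

Lemma rep_wf h h' s D : repD h h' s D -> wfD D.
Proof. destruct D; simpl; tauto. Qed.

Lemma rep_meet h h' s s2 D E : h <> h' -> repD h h' s D -> repD h h' s2 E ->
  (segs_intersect s s2 <-> meetD D E).
Proof.
  intros Hh. unfold segs_intersect.
  destruct D as [l1 r1|a1 b1], E as [l2 r2|a2 b2]; simpl.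
  - intros [W1 R1] [W2 R2]. split.
    + intros [p [P1 P2]]. apply R1 in P1. apply R2 in P2. lra.
    + intros [H1 H2]. exists (Rmax l1 l2, h). rewrite R1, R2; simpl.
      unfold Rmax; destruct (Rle_dec l1 l2); lra.
  - intros [W1 R1] R2. split.
    + intros [p [P1 P2]]. apply R1 in P1. apply R2 in P2.
      destruct P2 as [t [Ht [E1 E2]]]. destruct P1 as [E3 H3].
      assert (t * (h' - h) = 0) by lra.
      assert (t = 0). { destruct (Rmult_integral _ _ H) as [H'|H']; [auto| exfalso; lra]. }
      subst t. lra.
    + intros H. exists (a2, h). rewrite R1, R2; simpl. split; [lra|].
      exists 0. split; [lra|]. split; ring.
  - intros R1 [W2 R2]. split.
    + intros [p [P1 P2]]. apply R1 in P1. apply R2 in P2.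
      destruct P1 as [t [Ht [E1 E2]]]. destruct P2 as [E3 H3].
      assert (t * (h' - h) = 0) by lra.
      assert (t = 0). { destruct (Rmult_integral _ _ H) as [H'|H']; [auto| exfalso; lra]. }
      subst t. lra.
    + intros H. exists (a1, h). rewrite R1, R2; simpl. split; [|lra].
      exists 0. split; [lra|]. split; ring.
  - intros R1 R2. split.
    + intros [p [P1 P2]]. apply R1 in P1. apply R2 in P2.
      destruct P1 as [t [Ht [E1 E2]]]. destruct P2 as [u [Hu [E3 E4]]].
      assert ((t - u) * (h' - h) = 0) by lra.
      assert (t = u). { destruct (Rmult_integral _ _ H) as [H'|H']; lra. }
      subst u. set (x := a1 - a2). set (y := b1 - b2).
      assert (Heq : (1 - t) * x + t * y = 0).
      { unfold x, y. rewrite E1 in E3. replace ((1 - t) * (a1 - a2) + t * (b1 - b2)) with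
          (((1 - t) * a1 + t * b1) - ((1 - t) * a2 + t * b2)) by ring. lra. }
      assert (H1 : x * y * (1 - t) = - (t * y * y)).
      { replace (x * y * (1 - t)) with (y * ((1 - t) * x)) by ring.
        replace ((1 - t) * x) with (- (t * y)) by lra. ring. }
      assert (H2 : t * x * y = - ((1 - t) * x * x)).
      { replace (t * x * y) with (x * (t * y)) by ring.
        replace (t * y) with (- ((1 - t) * x)) by lra. ring. }
      assert (x * y = x * y * (1 - t) + t * x * y) by ring.
      assert (0 <= t * (y * y)) by (apply Rmult_le_pos; [lra| apply Rle_0_sqr]).
      assert (0 <= (1 - t) * (x * x)) by (apply Rmult_le_pos; [lra| apply Rle_0_sqr]).
      nra.
    + intros H. set (x := a1 - a2) in *. set (y := b1 - b2) in *.
      assert (Hc : exists t, 0 <= t <= 1 /\ (1 - t) * x + t * y = 0).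
      { destruct (Rle_dec x 0).
        - destruct (Rle_dec 0 y).
          + destruct (conv_ex x 0 y) as [t [Ht E]]; [lra|]. exists t; split; [auto|lra].
          + assert (x = 0) by nra. exists 0. split; [lra|]. rewrite H0; ring.
        - destruct (Rle_dec y 0).
          + destruct (conv_ex y 0 x) as [t [Ht E]]; [lra|]. exists (1 - t); split; [lra|]. lra.
          + exfalso. nra. }
      destruct Hc as [t [Ht E]].
      exists ((1 - t) * a1 + t * b1, (1 - t) * h + t * h'). rewrite R1, R2; simpl.
      split; exists t; split; auto; split; auto; unfold x, y in E; lra.
Qed.

Definition leftD (a b : R) (t : Dat) : Prop :=
  match t with DI l r => r < a | DP a' b' => a' < a /\ b' < b end.
Definition rightD (a b : R) (t : Dat) : Prop :=
  match t with DI l r => a < l | DP a' b' => a < a' /\ b < b' end.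
Definition sideD (c : bool) a b t := if c then leftD a b t else rightD a b t.

Lemma meet_sym D E : meetD D E -> meetD E D.
Proof. destruct D, E; simpl; intros; try lra; nra. Qed.

Lemma disj_side a b t : ~ meetD (DP a b) t -> leftD a b t \/ rightD a b t.
Proof.
  destruct t as [l r|a' b']; simpl; intros H.
  - destruct (Rlt_or_le r a); [left; lra|]. destruct (Rlt_or_le a l); [right; lra|].
    exfalso; apply H; lra.
  - destruct (Rlt_or_le a' a), (Rlt_or_le b' b).
    + left; lra.
    + exfalso; apply H; nra.
    + exfalso; apply H; nra.
    + right. destruct (Req_dec a a'); [subst; exfalso; apply H; nra|].
      destruct (Req_dec b b'); [subst; exfalso; apply H; nra|]. lra.
Qed.

Lemma opp_no_meet a b t u : leftD a b t -> rightD a b u -> ~ meetD t u.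
Proof. destruct t, u; simpl; intros; try lra; nra. Qed.

Lemma prop_side c a b t u : sideD c a b t -> meetD t u -> ~ meetD (DP a b) u -> sideD c a b u.
Proof.
  intros S M N. destruct (disj_side _ _ _ N) as [L|R]; destruct c; simpl in *; auto.
  - exfalso; exact (opp_no_meet _ _ _ _ L S (meet_sym _ _ M)).
  - exfalso; exact (opp_no_meet _ _ _ _ S R M).
Qed.

Lemma opp_pp c a b a' b' : sideD c a b (DP a' b') -> sideD c a' b' (DP a b) -> False.
Proof. destruct c; simpl; lra. Qed.

Definition cadj (n i j : nat) : Prop :=
  (j = i + 1 \/ i = j + 1 \/ (i = n - 1 /\ j = 0) \/ (j = n - 1 /\ i = 0))%nat.

Lemma mod_succ n i : (i < n)%nat -> ((i + 1) mod n = if Nat.eqb (i + 1) n then 0 else i + 1)%nat.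
Proof.
  intros H. destruct (Nat.eqb_spec (i+1) n).
  - rewrite e. apply Nat.Div0.mod_same.
  - apply Nat.mod_small. lia.
Qed.

Lemma cadj_iff n i j : (3 <= n)%nat -> (i < n)%nat -> (j < n)%nat ->
  (Gadj n (Vv i) (Vv j) <-> cadj n i j).
Proof.
  intros Hn Hi Hj. simpl. rewrite (mod_succ n i Hi), (mod_succ n j Hj). unfold cadj.
  destruct (Nat.eqb_spec (i+1) n), (Nat.eqb_spec (j+1) n); split; intros; lia.
Qed.

Definition HAdj (n : nat) (d : Gvtx -> Dat) : Prop :=
  forall x y, Gvalid n x -> Gvalid n y -> x <> y -> (Gadj n x y <-> meetD (d x) (d y)).

Definition Far (n : nat) (x y : Gvtx) : Prop :=
  match x with
  | Vv k => match y with Vv j | Wv j | Zv j => j <> k /\ ~ cadj n k j end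
  | Wv i => match y with Vv j | Wv j | Zv j => j <> i end
  | Zv i => match y with Vv _ => True | Wv j | Zv j => j <> i end
  end.

Definition Typ (n : nat) (d : Gvtx -> Dat) (x : Gvtx) (c : bool) : Prop :=
  exists a b, d x = DP a b /\ forall y, Gvalid n y -> Far n x y -> sideD c a b (d y).

Lemma typ_clash n d x y c : Typ n d x c -> Typ n d y c -> Gvalid n x -> Gvalid n y ->
  Far n x y -> Far n y x -> False.
Proof.
  intros [a [b [E1 H1]]] [a' [b' [E2 H2]]] Vx Vy F1 F2.
  specialize (H1 y Vy F1). specialize (H2 x Vx F2). rewrite E2 in H1. rewrite E1 in H2.
  exact (opp_pp _ _ _ _ _ H1 H2).
Qed.

Lemma adjM n d x y : HAdj n d -> Gvalid n x -> Gvalid n y -> x <> y -> Gadj n x y -> meetD (d x) (d y).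
Proof. intros H Vx Vy N G. apply (H x y Vx Vy N); auto. Qed.
Lemma nadjM n d x y : HAdj n d -> Gvalid n x -> Gvalid n y -> x <> y -> ~ Gadj n x y -> ~ meetD (d x) (d y).
Proof. intros H Vx Vy N G M. apply G. apply (H x y Vx Vy N); auto. Qed.

Definition wr (n x : nat) : nat := if Nat.ltb x n then x else (x - n)%nat.

Ltac wr_cases := unfold wr in *; repeat match goal with
  | |- context [Nat.ltb ?x ?y] => destruct (Nat.ltb_spec x y)
  | H : context [Nat.ltb ?x ?y] |- _ => destruct (Nat.ltb_spec x y)
  end.

Lemma walk_side n d a b s L :
  (forall i j, (i < n)%nat -> (j < n)%nat -> i <> j -> cadj n i j -> meetD (d (Vv i)) (d (Vv j))) ->
  (forall m, (m <= L)%nat -> (wr n (s + m) < n)%nat /\ ~ meetD (DP a b) (d (Vv (wr n (s + m))))) ->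
  (forall m, (m < L)%nat -> wr n (s + m) <> wr n (s + m + 1) /\ cadj n (wr n (s + m)) (wr n (s + m + 1))) ->
  exists c, forall m, (m <= L)%nat -> sideD c a b (d (Vv (wr n (s + m)))).
Proof.
  intros HM H1 H2.
  destruct (H1 0%nat ltac:(lia)) as [_ N0].
  destruct (disj_side _ _ _ N0) as [S0|S0]; [exists true|exists false];
  (intros m; induction m; intros Hm; [simpl; exact S0|];
   replace (s + S m)%nat with (s + m + 1)%nat by lia;
   apply prop_side with (t := d (Vv (wr n (s + m)))); [apply IHm; lia| |];
   [ destruct (H2 m ltac:(lia)) as [D C]; apply HM; auto; [apply (H1 m); lia|];
     replace (s + m + 1)%nat with (s + S m)%nat by lia; apply (H1 (S m)); lia
   | replace (s + m + 1)%nat with (s + S m)%nat by lia; apply (H1 (S m)); lia ]).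
Qed.

Lemma cadj_meet n d : (3 <= n)%nat -> HAdj n d ->
  forall i j, (i < n)%nat -> (j < n)%nat -> i <> j -> cadj n i j -> meetD (d (Vv i)) (d (Vv j)).
Proof.
  intros Hn H i j Hi Hj N C. apply adjM with n; simpl; auto; [congruence|].
  apply cadj_iff; auto.
Qed.

Lemma typ_exists n d x a b : (7 <= n)%nat -> HAdj n d -> Gvalid n x -> d x = DP a b ->
  exists c, Typ n d x c.
Proof.
  intros Hn H Vx Ex. pose proof (cadj_meet n d ltac:(lia) H) as HM.
  destruct x as [k|i|i]; simpl in Vx.
  - destruct (walk_side n d a b (k + 2) (n - 4) HM) as [c Hc].
    + intros m Hm. assert (Hj : (wr n (k + 2 + m) < n)%nat /\ wr n (k + 2 + m) <> k /\
         ~ cadj n k (wr n (k + 2 + m))) by (unfold cadj; wr_cases; lia).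
      destruct Hj as [Hj1 [Hj2 Hj3]]. split; auto. rewrite <- Ex.
      apply nadjM with n; [exact H|exact Vx|exact Hj1|congruence|]. rewrite cadj_iff; auto; lia.
    + intros m Hm. unfold cadj; wr_cases; lia.
    + exists c, a, b. split; auto.
      assert (Hcyc : forall j, (j < n)%nat -> j <> k -> ~ cadj n k j -> sideD c a b (d (Vv j))).
      { intros j Hj1 Hj2 Hj3.
        assert (Hex : exists m, (m <= n - 4)%nat /\ wr n (k + 2 + m) = j).
        { unfold cadj in Hj3. destruct (Nat.leb_spec (k + 2) j);
            [exists (j - (k + 2))%nat | exists (j + n - (k + 2))%nat]; split; wr_cases; lia. }
        destruct Hex as [m [Hm <-]]. apply Hc; auto. }
      intros y Vy Fy. destruct y as [j|j|j]; simpl in Vy, Fy; destruct Fy as [F1 F2].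
      * apply Hcyc; auto.
      * apply prop_side with (t := d (Vv j)); [apply Hcyc; auto| |].
        -- apply adjM with n; simpl; auto; congruence.
        -- rewrite <- Ex. apply nadjM with n; simpl; auto; congruence.
      * apply prop_side with (t := d (Wv j)); [apply prop_side with (t := d (Vv j)); [apply Hcyc; auto| |]| |].
        -- apply adjM with n; simpl; auto; congruence.
        -- rewrite <- Ex. apply nadjM with n; simpl; auto; congruence.
        -- apply adjM with n; simpl; auto; congruence.
        -- rewrite <- Ex. apply nadjM with n; simpl; auto; congruence.
  - destruct (walk_side n d a b (i + 1) (n - 2) HM) as [c Hc].
    + intros m Hm. assert (Hj : (wr n (i + 1 + m) < n)%nat /\ wr n (i + 1 + m) <> i)
        by (wr_cases; lia).
      destruct Hj as [Hj1 Hj2]. split; auto. rewrite <- Ex.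
      apply nadjM with n; simpl; auto; congruence.
    + intros m Hm. unfold cadj; wr_cases; lia.
    + exists c, a, b. split; auto.
      assert (Hcyc : forall j, (j < n)%nat -> j <> i -> sideD c a b (d (Vv j))).
      { intros j Hj1 Hj2.
        assert (Hex : exists m, (m <= n - 2)%nat /\ wr n (i + 1 + m) = j).
        { destruct (Nat.leb_spec (i + 1) j);
            [exists (j - (i + 1))%nat | exists (j + n - (i + 1))%nat]; split; wr_cases; lia. }
        destruct Hex as [m [Hm <-]]. apply Hc; auto. }
      intros y Vy Fy. destruct y as [j|j|j]; simpl in Vy, Fy.
      * apply Hcyc; auto.
      * apply prop_side with (t := d (Vv j)); [apply Hcyc; auto| |].
        -- apply adjM with n; simpl; auto; congruence.
        -- rewrite <- Ex. apply nadjM with n; simpl; auto; congruence.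
      * apply prop_side with (t := d (Wv j)); [apply prop_side with (t := d (Vv j)); [apply Hcyc; auto| |]| |].
        -- apply adjM with n; simpl; auto; congruence.
        -- rewrite <- Ex. apply nadjM with n; simpl; auto; congruence.
        -- apply adjM with n; simpl; auto; congruence.
        -- rewrite <- Ex. apply nadjM with n; simpl; auto; congruence.
  - destruct (walk_side n d a b 0 (n - 1) HM) as [c Hc].
    + intros m Hm. assert (Hj : (wr n (0 + m) < n)%nat) by (wr_cases; lia).
      split; auto. rewrite <- Ex.
      apply nadjM with n; simpl; auto; congruence.
    + intros m Hm. unfold cadj; wr_cases; lia.
    + exists c, a, b. split; auto.
      assert (Hcyc : forall j, (j < n)%nat -> sideD c a b (d (Vv j))).
      { intros j Hj1.
        assert (Hex : wr n (0 + j) = j) by (wr_cases; lia).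
        rewrite <- Hex. apply Hc; lia. }
      intros y Vy Fy. destruct y as [j|j|j]; simpl in Vy, Fy.
      * apply Hcyc; auto.
      * apply prop_side with (t := d (Vv j)); [apply Hcyc; auto| |].
        -- apply adjM with n; simpl; auto; congruence.
        -- rewrite <- Ex. apply nadjM with n; simpl; auto; congruence.
      * apply prop_side with (t := d (Wv j)); [apply prop_side with (t := d (Vv j)); [apply Hcyc; auto| |]| |].
        -- apply adjM with n; simpl; auto; congruence.
        -- rewrite <- Ex. apply nadjM with n; simpl; auto; congruence.
        -- apply adjM with n; simpl; auto; congruence.
        -- rewrite <- Ex. apply nadjM with n; simpl; auto; congruence.
Qed.

Definition isPd (D : Dat) : Prop := match D with DP _ _ => True | DI _ _ => False end.
Definition Sidx (d : Gvtx -> Dat) (i : nat) : Prop := isPd (d (Wv i)) \/ isPd (d (Zv i)).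
Definition pb (d : Gvtx -> Dat) (i : nat) : bool := match d (Vv i) with DP _ _ => true | DI _ _ => false end.
Definition nx (n i : nat) : nat := if Nat.eqb (i + 1) n then 0%nat else (i + 1)%nat.
Definition pv (n i : nat) : nat := if Nat.eqb i 0 then (n - 1)%nat else (i - 1)%nat.

Ltac ix := unfold nx, pv, cadj in *; repeat match goal with
  | |- context [Nat.eqb ?x ?y] => destruct (Nat.eqb_spec x y)
  | H : context [Nat.eqb ?x ?y] |- _ => destruct (Nat.eqb_spec x y)
  end; lia.

Definition tr (D : Dat) (c : R) : Prop := match D with DI l r => l <= c <= r | DP a _ => c = a end.

Lemma trace_meet D l r : wfD D -> l <= r -> meetD D (DI l r) -> exists c, tr D c /\ l <= c <= r.
Proof.
  destruct D as [l1 r1|a b]; simpl; intros W1 W2 M.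
  - exists (Rmax l1 l). unfold Rmax; destruct (Rle_dec l1 l); lra.
  - exists a; lra.
Qed.

Lemma trace_nomeet D l r c : ~ meetD D (DI l r) -> tr D c -> c < l \/ r < c.
Proof.
  destruct D as [l1 r1|a b]; simpl; intros N T.
  - destruct (Rlt_or_le c l); [left; auto|]. destruct (Rlt_or_le r c); [right; auto|].
    exfalso; apply N; lra.
  - subst. destruct (Rlt_or_le a l); [left; auto|]. destruct (Rlt_or_le r a); [right; auto|].
    exfalso; apply N; lra.
Qed.

Lemma ndisj l1 r1 l2 r2 : ~ meetD (DI l1 r1) (DI l2 r2) -> r2 < l1 \/ r1 < l2.
Proof. simpl. intros N. destruct (Rlt_or_le r2 l1); [left; auto|]. right.
  destruct (Rlt_or_le r1 l2); auto. exfalso; apply N; lra. Qed.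

Lemma oneD lA rA lV rV lB rB lW rW c e z :
  lA <= rV -> lV <= rA -> lB <= rV -> lV <= rB -> lW <= rV -> lV <= rW ->
  (rB < lA \/ rA < lB) -> (rW < lA \/ rA < lW) -> (rW < lB \/ rB < lW) ->
  lA <= c <= rA -> (c < lV \/ rV < c) ->
  lB <= e <= rB -> (e < lV \/ rV < e) ->
  lW <= z <= rW -> (z < lV \/ rV < z) -> False.
Proof.
  intros. assert (HA : (lA <= lV <= rA) \/ (lA <= rV <= rA)) by lra.
  assert (HB : (lB <= lV <= rB) \/ (lB <= rV <= rB)) by lra.
  assert (HW : (lW <= lV <= rW) \/ (lW <= rV <= rW)) by lra.
  lra.
Qed.


Definition HWf (n : nat) (d : Gvtx -> Dat) : Prop := forall x, Gvalid n x -> wfD (d x).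

Lemma nmeetVV n d i j : (3 <= n)%nat -> HAdj n d -> (i < n)%nat -> (j < n)%nat -> i <> j ->
  ~ cadj n i j -> ~ meetD (d (Vv i)) (d (Vv j)).
Proof.
  intros Hn H Hi Hj N C. apply nadjM with n; [exact H|exact Hi|exact Hj|congruence|].
  rewrite cadj_iff; auto.
Qed.

Lemma F3 n d i lV rV lA rA lB rB : (7 <= n)%nat -> HAdj n d -> HWf n d -> (i < n)%nat ->
  d (Vv i) = DI lV rV -> d (Vv (pv n i)) = DI lA rA -> d (Vv (nx n i)) = DI lB rB -> Sidx d i.
Proof.
  intros Hn H W Hi EV EA EB.
  destruct (d (Wv i)) as [lW rW|a b] eqn:EW; [|left; rewrite EW; exact I]. exfalso.
  set (p := pv n i) in *. set (q := nx n i) in *.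
  set (pp := pv n p). set (qq := nx n q).
  assert (Hp : (p < n)%nat) by (unfold p; ix).
  assert (Hq : (q < n)%nat) by (unfold q; ix).
  assert (Hpp : (pp < n)%nat) by (unfold pp, p; ix).
  assert (Hqq : (qq < n)%nat) by (unfold qq, q; ix).
  pose proof (cadj_meet n d ltac:(lia) H) as HM.
  assert (MAV : meetD (d (Vv p)) (d (Vv i))) by (apply HM; auto; unfold p; ix).
  assert (MBV : meetD (d (Vv q)) (d (Vv i))) by (apply HM; auto; unfold q; ix).
  assert (NAB : ~ meetD (d (Vv p)) (d (Vv q))) by (apply (nmeetVV n); auto; unfold p, q; ix).
  assert (MWV : meetD (d (Wv i)) (d (Vv i))) by (apply adjM with n; simpl; auto; congruence).
  assert (NWA : ~ meetD (d (Wv i)) (d (Vv p))) by (apply nadjM with n; simpl; auto; [congruence|unfold p; ix]).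
  assert (NWB : ~ meetD (d (Wv i)) (d (Vv q))) by (apply nadjM with n; simpl; auto; [congruence|unfold q; ix]).
  assert (MCA : meetD (d (Vv pp)) (d (Vv p))) by (apply HM; auto; unfold pp, p; ix).
  assert (NCV : ~ meetD (d (Vv pp)) (d (Vv i))) by (apply (nmeetVV n); auto; unfold pp, p; ix).
  assert (MDB : meetD (d (Vv qq)) (d (Vv q))) by (apply HM; auto; unfold qq, q; ix).
  assert (NDV : ~ meetD (d (Vv qq)) (d (Vv i))) by (apply (nmeetVV n); auto; unfold qq, q; ix).
  assert (MZW : meetD (d (Zv i)) (d (Wv i))) by (apply adjM with n; simpl; auto; congruence).
  assert (NZV : ~ meetD (d (Zv i)) (d (Vv i))) by (apply nadjM with n; simpl; auto; congruence).
  assert (WA : lA <= rA) by (pose proof (W (Vv p) Hp) as X; rewrite EA in X; exact X).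
  assert (WB : lB <= rB) by (pose proof (W (Vv q) Hq) as X; rewrite EB in X; exact X).
  assert (WW : lW <= rW) by (pose proof (W (Wv i) Hi) as X; rewrite EW in X; exact X).
  rewrite EA in MAV, NAB, NWA, MCA. rewrite EB in MBV, NAB, NWB, MDB.
  rewrite EV in MAV, MBV, MWV, NCV, NDV, NZV. rewrite EW in MWV, NWA, NWB, MZW.
  destruct (trace_meet _ _ _ (W (Vv pp) Hpp) WA MCA) as [c [Tc Hc]].
  destruct (trace_meet _ _ _ (W (Vv qq) Hqq) WB MDB) as [e [Te He]].
  destruct (trace_meet _ _ _ (W (Zv i) Hi) WW MZW) as [z [Tz Hz]].
  pose proof (trace_nomeet _ _ _ _ NCV Tc). pose proof (trace_nomeet _ _ _ _ NDV Te).
  pose proof (trace_nomeet _ _ _ _ NZV Tz).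
  pose proof (ndisj _ _ _ _ NAB). pose proof (ndisj _ _ _ _ NWA). pose proof (ndisj _ _ _ _ NWB).
  simpl in MAV, MBV, MWV.
  apply (oneD lA rA lV rV lB rB lW rW c e z); try tauto; lra.
Qed.

Lemma F4 n d j a b i l r : (7 <= n)%nat -> HAdj n d -> (j < n)%nat -> (i < n)%nat ->
  cadj n i j -> d (Vv j) = DP a b -> d (Vv i) = DI l r -> Sidx d j.
Proof.
  intros Hn H Hj Hi C EJ EI.
  destruct (d (Wv j)) as [lW rW|a' b'] eqn:EW; [|left; rewrite EW; exact I]. exfalso.
  assert (M1 : meetD (d (Vv i)) (d (Vv j))) by (apply (cadj_meet n); auto; [lia|ix]).
  assert (M2 : meetD (d (Vv j)) (d (Wv j))) by (apply adjM with n; simpl; auto; congruence).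
  assert (N3 : ~ meetD (d (Vv i)) (d (Wv j))) by (apply nadjM with n; simpl; auto; [congruence|ix]).
  rewrite EI, EJ in M1. rewrite EJ, EW in M2. rewrite EI, EW in N3. simpl in *. apply N3; lra.
Qed.

Lemma F5 n d j a b i1 l1 r1 i2 l2 r2 : (7 <= n)%nat -> HAdj n d -> (j < n)%nat -> (i1 < n)%nat ->
  (i2 < n)%nat -> i1 <> i2 -> cadj n i1 j -> cadj n i2 j -> i1 <> j -> i2 <> j ->
  d (Vv j) = DP a b -> d (Vv i1) = DI l1 r1 -> d (Vv i2) = DI l2 r2 -> False.
Proof.
  intros Hn H Hj H1 H2 N C1 C2 N1 N2 EJ E1 E2.
  assert (M1 : meetD (d (Vv i1)) (d (Vv j))) by (apply (cadj_meet n); auto; lia).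
  assert (M2 : meetD (d (Vv i2)) (d (Vv j))) by (apply (cadj_meet n); auto; lia).
  assert (N3 : ~ meetD (d (Vv i1)) (d (Vv i2))) by (apply (nmeetVV n); auto; [lia|ix]).
  rewrite E1, EJ in M1. rewrite E2, EJ in M2. rewrite E1, E2 in N3. simpl in *. apply N3; lra.
Qed.

Lemma G n d i : (7 <= n)%nat -> HAdj n d -> HWf n d -> (i < n)%nat -> pb d i = false ->
  exists j, (j < n)%nat /\ Sidx d j /\ (j = i \/ (pb d j = true /\ cadj n i j /\ j <> i)).
Proof.
  intros Hn H W Hi Pi.
  destruct (classic (Sidx d i)) as [S|S]; [exists i; auto|].
  unfold pb in Pi. destruct (d (Vv i)) as [lV rV|] eqn:EV; [|discriminate].
  destruct (d (Vv (nx n i))) as [lB rB|aB bB] eqn:EB.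
  - destruct (d (Vv (pv n i))) as [lA rA|aA bA] eqn:EA.
    + exfalso; apply S; eapply F3; eauto.
    + exists (pv n i). split; [ix|]. split.
      * eapply F4 with (i := i); eauto; [ix|ix].
      * right. unfold pb; rewrite EA. split; auto. split; ix.
  - exists (nx n i). split; [ix|]. split.
    * eapply F4 with (i := i); eauto; [ix|ix].
    * right. unfold pb; rewrite EB. split; auto. split; ix.
Qed.

Fixpoint cnt (p : nat -> bool) (m : nat) : nat :=
  match m with O => O | S m' => (cnt p m' + (if p m' then 1 else 0))%nat end.

Lemma cnt_split p m : (cnt p m + cnt (fun i => negb (p i)) m)%nat = m.
Proof. induction m; simpl; auto. destruct (p m); simpl; lia. Qed.

Lemma cnt_pick p m k : (S k <= cnt p m)%nat -> exists i, (i < m)%nat /\ p i = true /\ (k <= cnt p i)%nat.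
Proof.
  induction m; simpl; intros H; [lia|].
  destruct (p m) eqn:E.
  - exists m. split; [lia|]. split; auto. lia.
  - destruct IHm as [i [Hi [Pi Ci]]]; [lia|]. exists i; split; [lia|]; auto.
Qed.

Lemma cyc_same n d i j c : (7 <= n)%nat -> Typ n d (Vv i) c -> Typ n d (Vv j) c ->
  (i < n)%nat -> (j < n)%nat -> i <> j -> cadj n i j.
Proof.
  intros Hn T1 T2 Hi Hj N. destruct (classic (cadj n i j)) as [C|C]; auto. exfalso.
  apply (typ_clash n d (Vv i) (Vv j) c T1 T2 Hi Hj); simpl; split; auto; unfold cadj in *; lia.
Qed.

Lemma pend_far n x y i j : (x = Wv i \/ x = Zv i) -> (y = Wv j \/ y = Zv j) -> i <> j -> Far n x y.
Proof. intros [-> | ->] [-> | ->] N; simpl; auto. Qed.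

Lemma pend_typ n d i : (7 <= n)%nat -> HAdj n d -> (i < n)%nat -> Sidx d i ->
  exists x c, (x = Wv i \/ x = Zv i) /\ Typ n d x c.
Proof.
  intros Hn H Hi [S|S].
  - destruct (d (Wv i)) as [|a b] eqn:E; [contradiction|].
    destruct (typ_exists n d (Wv i) a b Hn H Hi E) as [c T]. exists (Wv i), c; auto.
  - destruct (d (Zv i)) as [|a b] eqn:E; [contradiction|].
    destruct (typ_exists n d (Zv i) a b Hn H Hi E) as [c T]. exists (Zv i), c; auto.
Qed.

Lemma pend_valid n x i : (x = Wv i \/ x = Zv i) -> (i < n)%nat -> Gvalid n x.
Proof. intros [-> | ->]; simpl; auto. Qed.

Lemma S_clash n d i j k : (7 <= n)%nat -> HAdj n d -> (i < n)%nat -> (j < n)%nat -> (k < n)%nat ->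
  i <> j -> j <> k -> i <> k -> Sidx d i -> Sidx d j -> Sidx d k -> False.
Proof.
  intros Hn H Hi Hj Hk N1 N2 N3 S1 S2 S3.
  destruct (pend_typ n d i Hn H Hi S1) as [x [c1 [X T1]]].
  destruct (pend_typ n d j Hn H Hj S2) as [y [c2 [Y T2]]].
  destruct (pend_typ n d k Hn H Hk S3) as [z [c3 [Z T3]]].
  pose proof (pend_valid n x i X Hi). pose proof (pend_valid n y j Y Hj).
  pose proof (pend_valid n z k Z Hk).
  destruct c1, c2, c3;
  first
    [ apply (typ_clash n d x y _ T1 T2); auto; eapply pend_far; eauto
    | apply (typ_clash n d x z _ T1 T3); auto; eapply pend_far; eauto
    | apply (typ_clash n d y z _ T2 T3); auto; eapply pend_far; eauto ].
Qed.

Lemma tri n d i j k c : (7 <= n)%nat -> (i < n)%nat -> (j < n)%nat -> (k < n)%nat ->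
  i <> j -> j <> k -> i <> k -> Typ n d (Vv i) c -> Typ n d (Vv j) c -> Typ n d (Vv k) c -> False.
Proof.
  intros Hn Hi Hj Hk N1 N2 N3 T1 T2 T3.
  pose proof (cyc_same n d i j c Hn T1 T2 Hi Hj N1).
  pose proof (cyc_same n d j k c Hn T2 T3 Hj Hk N2).
  pose proof (cyc_same n d i k c Hn T1 T3 Hi Hk N3).
  unfold cadj in *; lia.
Qed.

Lemma cyc_typ n d i : (7 <= n)%nat -> HAdj n d -> (i < n)%nat -> pb d i = true ->
  exists c, Typ n d (Vv i) c.
Proof.
  intros Hn H Hi P. unfold pb in P. destruct (d (Vv i)) as [|a b] eqn:E; [discriminate|].
  exact (typ_exists n d (Vv i) a b Hn H Hi E).
Qed.

Theorem abstract n d : (7 <= n)%nat -> HAdj n d -> HWf n d -> False.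
Proof.
  intros Hn H W. pose proof (cnt_split (pb d) n) as Hs.
  assert (HC : (5 <= cnt (pb d) n)%nat \/ (3 <= cnt (fun i => negb (pb d i)) n)%nat) by lia.
  destruct HC as [HC|HC].
  - destruct (cnt_pick _ _ _ HC) as [i1 [H1 [P1 C1]]].
    destruct (cnt_pick _ _ _ C1) as [i2 [H2 [P2 C2]]].
    destruct (cnt_pick _ _ _ C2) as [i3 [H3 [P3 C3]]].
    destruct (cnt_pick _ _ _ C3) as [i4 [H4 [P4 C4]]].
    destruct (cnt_pick _ _ _ C4) as [i5 [H5 [P5 C5]]].
    destruct (cyc_typ n d i1 Hn H ltac:(lia) P1) as [c1 T1].
    destruct (cyc_typ n d i2 Hn H ltac:(lia) P2) as [c2 T2].
    destruct (cyc_typ n d i3 Hn H ltac:(lia) P3) as [c3 T3].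
    destruct (cyc_typ n d i4 Hn H ltac:(lia) P4) as [c4 T4].
    destruct (cyc_typ n d i5 Hn H ltac:(lia) P5) as [c5 T5].
    destruct c1, c2, c3, c4, c5;
    match goal with
    | A : Typ _ _ (Vv ?i) ?c, B : Typ _ _ (Vv ?j) ?c, C : Typ _ _ (Vv ?k) ?c |- _ =>
        apply (tri n d i j k c Hn); [lia|lia|lia|lia|lia|lia|exact A|exact B|exact C]
    end.
  - destruct (cnt_pick _ _ _ HC) as [i1 [H1 [P1 C1]]].
    destruct (cnt_pick _ _ _ C1) as [i2 [H2 [P2 C2]]].
    destruct (cnt_pick _ _ _ C2) as [i3 [H3 [P3 C3]]].
    apply Bool.negb_true_iff in P1, P2, P3.
    destruct (G n d i1 Hn H W ltac:(lia) P1) as [j1 [J1 [S1 R1]]].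
    destruct (G n d i2 Hn H W ltac:(lia) P2) as [j2 [J2 [S2 R2]]].
    destruct (G n d i3 Hn H W ltac:(lia) P3) as [j3 [J3 [S3 R3]]].
    assert (Dist : forall ia ib ja jb, (ia < n)%nat -> (ib < n)%nat -> ia <> ib ->
      pb d ia = false -> pb d ib = false ->
      (ja = ia \/ (pb d ja = true /\ cadj n ia ja /\ ja <> ia)) ->
      (jb = ib \/ (pb d jb = true /\ cadj n ib jb /\ jb <> ib)) -> (ja < n)%nat -> ja <> jb).
    { intros ia ib ja jb Ha Hb N Pa Pb Ra Rb Hja E. subst jb.
      destruct Ra as [->|[Qa [Ca Na]]], Rb as [Eb|[Qb [Cb Nb]]].
      - auto.
      - congruence.
      - subst ja; congruence.
      - unfold pb in Pa, Pb, Qa.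
        destruct (d (Vv ia)) as [la ra|] eqn:Ea; [|discriminate].
        destruct (d (Vv ib)) as [lb rb|] eqn:Eb; [|discriminate].
        destruct (d (Vv ja)) as [|a b] eqn:Ej; [discriminate|].
        apply (F5 n d ja a b ia la ra ib lb rb); auto; unfold cadj in *; lia. }
    apply (S_clash n d j1 j2 j3); auto.
    + apply (Dist i1 i2); auto; lia.
    + apply (Dist i2 i3); auto; lia.
    + apply (Dist i1 i3); auto; lia.
Qed.

Definition mkD (h : R) (s : segment) : Dat :=
  if Req_EM_T (snd (fst s)) h then
    (if Req_EM_T (snd (snd s)) h then DI (Rmin (fst (fst s)) (fst (snd s))) (Rmax (fst (fst s)) (fst (snd s)))
     else DP (fst (fst s)) (fst (snd s)))
  else DP (fst (snd s)) (fst (fst s)).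

Lemma mkD_rep h h' s : h <> h' ->
  interval_seg_on h s \/ ((on_hline h (fst s) /\ on_hline h' (snd s)) \/ (on_hline h' (fst s) /\ on_hline h (snd s))) ->
  repD h h' s (mkD h s).
Proof.
  intros Hh K. unfold mkD, interval_seg_on, on_hline in *.
  destruct (Req_EM_T (snd (fst s)) h) as [E1|E1], (Req_EM_T (snd (snd s)) h) as [E2|E2].
  - apply rep_interval. split; auto.
  - apply rep_perm1; unfold on_hline; auto.
    destruct K as [[_ K]|[[_ K]|[K _]]]; [contradiction|auto|]. exfalso; apply Hh; congruence.
  - apply rep_perm2; unfold on_hline; auto.
    destruct K as [[K _]|[[K _]|[K _]]]; [contradiction|contradiction|auto].
  - exfalso. destruct K as [[K _]|[[K _]|[_ K]]]; contradiction.
Qed.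

Lemma core n h h' (f : Gvtx -> segment) : (7 <= n)%nat -> h <> h' ->
  (forall x, Gvalid n x -> interval_seg_on h (f x) \/
     ((on_hline h (fst (f x)) /\ on_hline h' (snd (f x))) \/ (on_hline h' (fst (f x)) /\ on_hline h (snd (f x))))) ->
  (forall x y, Gvalid n x -> Gvalid n y -> x <> y -> (Gadj n x y <-> segs_intersect (f x) (f y))) ->
  False.
Proof.
  intros Hn Hh K A.
  set (d := fun x => mkD h (f x)).
  assert (R : forall x, Gvalid n x -> repD h h' (f x) (d x)) by (intros; apply mkD_rep; auto).
  apply (abstract n d Hn).
  - intros x y Vx Vy N. rewrite (A x y Vx Vy N). apply rep_meet with h h'; auto.
  - intros x Vx. exact (rep_wf _ _ _ _ (R x Vx)).
Qed.

Theorem mainTheorem8 : forall (n : nat), (7 <= n)%nat ->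
  forall h1 h2 : R, h1 <> h2 ->
  ~ IP_SEG_star_graph h1 h2 Gvtx (Gvalid n) (Gadj n).
Proof.
  intros n Hn h1 h2 Hh [f [K [[h [Eh Hon]] A]]].
  destruct Eh as [->| ->].
  - apply (core n h1 h2 f Hn Hh); auto.
    intros x Vx. destruct (K x Vx) as [I|P]; [left; apply Hon; auto|right; exact P].
  - apply (core n h2 h1 f Hn (not_eq_sym Hh)); auto.
    intros x Vx. destruct (K x Vx) as [I|P]; [left; apply Hon; auto|right].
    unfold permutation_seg in P. tauto.
Qed.
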